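(* Let $K$ be a field of characteristic $p$ with $K \neq \mathbb{F}_2$. Then every arithmetic progression $\{a + bt : t \in \mathbb{N}_0\}$ with $a, b \in \mathbb{N}_0$ is a $K$-DML set over split torus.
   Context: For a quasi-projective variety $X$ over $K$, a set $S \subseteq \mathbb{N}_0$ is a $K$-DML set over $X$ if there exist an endomorphism $\Phi$ of $X$ (a morphism $X \to X$ defined over $K$), a point $\alpha \in X(K)$ and a closed subvariety $V \subseteq X$ defined over $K$ (not necessarily irreducible) such that $S = \{ n \in \mathbb{N}_0 : \Phi^n(\alpha) \in V(K)\}$. $S$ is a $K$-DML set over split torus if it is a $K$-DML set over $\mathbb{G}_m^k$ for some $k \in \mathbb{N}$. *)

(* Defs.v *)
From HB Require Import structures.
From mathcomp Require Import all_boot all_order all_algebra.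
From mathcomp Require Import mpoly.
Set Implicit Arguments. Unset Strict Implicit. Unset Printing Implicit Defensive.
Import GRing.Theory.
Local Open Scope ring_scope.

(* The coordinate ring is the Laurent polynomial
   ring K[x_1^{+-1},...,x_k^{+-1}]; a Laurent polynomial is represented as
   g / (x_1 ... x_k)^n with g a polynomial. *)

Definition torus_pt (K : fieldType) (k : nat) (x : 'I_k -> K) : Prop :=
  forall i, x i != 0.

Definition laurent (K : fieldType) (k : nat) : Type := ({mpoly K[k]} * nat)%type.

Definition mono_all (K : fieldType) (k : nat) : {mpoly K[k]} := \prod_(i < k) 'X_i.

Definition laurent_eval (K : fieldType) (k : nat) (f : laurent K k) (x : 'I_k -> K) : K :=
  (f.1).@[x] / (\prod_(i < k) x i) ^+ f.2.

Definition laurent_unit (K : fieldType) (k : nat) (f : laurent K k) : Prop :=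
  exists (h : {mpoly K[k]}) (m : nat), f.1 * h = mono_all K k ^+ m.

(* An endomorphism of G_m^k defined over K is given by k coordinate functions
   that are units of the coordinate ring (i.e. regular maps into G_m). *)
Definition torus_endo (K : fieldType) (k : nat) (Phi : 'I_k -> laurent K k) : Prop :=
  forall i, laurent_unit (Phi i).

Definition endo_apply (K : fieldType) (k : nat) (Phi : 'I_k -> laurent K k)
  (x : 'I_k -> K) : 'I_k -> K := fun i => laurent_eval (Phi i) x.

(* K-points of the closed subvariety of G_m^k cut out by a finite family of
   (Laurent, after clearing monomial denominators) polynomials *)
Definition in_closed (K : fieldType) (k : nat) (V : seq {mpoly K[k]}) (x : 'I_k -> K) : Prop :=
  torus_pt x /\ forall P, P \in V -> P.@[x] = 0.

Definition K_DML_torus (K : fieldType) (k : nat) (S : nat -> Prop) : Prop :=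
  exists (Phi : 'I_k -> laurent K k), torus_endo Phi /\
  exists (alpha : 'I_k -> K), torus_pt alpha /\
  exists (V : seq {mpoly K[k]}),
    forall n : nat, S n <-> in_closed V (iter n (endo_apply Phi) alpha).

Definition K_DML_split_torus (K : fieldType) (S : nat -> Prop) : Prop :=
  exists k : nat, (0 < k)%N /\ K_DML_torus K k S.

(* Main.v *)
Require Import Defs.
From HB Require Import structures.
From mathcomp Require Import all_boot all_order all_algebra.
From mathcomp Require Import mpoly.
From mathcomp Require Import zify.
Set Implicit Arguments. Unset Strict Implicit. Unset Printing Implicit Defensive.
Import GRing.Theory.

Definition fstep (a b i : nat) : nat :=
  if b == 0%N then (if (i < a)%N then i.+1 else a.+1)
  else (if (i.+1 < a + b)%N then i.+1 else a).

Lemma fstep_iter0 a n : iter n (fstep a 0) 0%N = if (n <= a)%N then n else a.+1.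
Proof.
elim: n => [|n IH] //=; rewrite IH /fstep /=.
by repeat case: ifP; lia.
Qed.

Lemma fstep_iterS a b n : (0 < b)%N ->
  iter n (fstep a b) 0%N = if (n < a)%N then n else (a + (n - a) %% b)%N.
Proof.
move=> b0; have bn0 : (b == 0%N) = false by case: b b0.
elim: n => [|n IH] /=; first by case: a => //; rewrite sub0n mod0n.
rewrite IH /fstep bn0.
case: (ltngtP n.+1 a) => H.
- by rewrite ifT ?ifT //; lia.
-   rewrite subSn; last lia.
  have Hr := ltn_pmod (n - a) b0.
  case: ltnP => H2.
  + rewrite -[(n-a).+1]addn1 -modnDml addn1 (modn_small (m := ((n-a) %% b).+1)); lia.
  + have E : ((n - a) %% b).+1 = b by lia.
    by rewrite -[(n-a).+1]addn1 -modnDml addn1 E modnn addn0.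
- by rewrite H subnn mod0n addn0 ifT //; lia.
Qed.

Lemma fstep_le a b i : (fstep a b i <= a + b + 1)%N \/ (a + b + 1 < i)%N.
Proof. rewrite /fstep; repeat case: ifP; lia. Qed.

Lemma fstep_iter_le a b n : (iter n (fstep a b) 0 <= a + b + 1)%N.
Proof. elim: n => [|n IH] /=; first lia.
case: (fstep_le a b (iter n (fstep a b) 0)) => //; lia. Qed.

Lemma fstep_set a b n :
  (exists t, n = a + b * t)%N <-> iter n (fstep a b) 0 = a.
Proof.
case: (posnP b) => [->|b0].
  rewrite fstep_iter0; split; first by case=> t ->; rewrite mul0n addn0 leqnn.
  by case: ifP => [_ ->|]; [exists 0%N; lia | lia].
rewrite fstep_iterS //; case: ifP => Ha.
  by split; [case=> t E; lia | move=> E; lia].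
split.
  by case=> t ->; rewrite addKn mulnC modnMl addn0.
move=> E; have /dvdnP [t Ht] : (b %| n - a)%N by rewrite /dvdn; apply/eqP; lia.
by exists t; rewrite mulnC -Ht; lia.
Qed.

From Stdlib Require Import FunctionalExtensionality.
Local Open Scope ring_scope.

Section Main.
Variables (K : fieldType) (k : nat) (F : 'I_k -> 'I_k) (t : K).
Hypotheses (t0 : t != 0) (t1 : t != 1).

Definition PhiF : 'I_k -> laurent K k :=
  fun j => (\prod_(i < k | F i == j) 'X_i, 0%N).

Definition ind (c : 'I_k) : 'I_k -> K := fun i => if i == c then t else 1.

Lemma PhiF_endo : torus_endo PhiF.
Proof.
move=> j; exists (\prod_(i < k | F i != j) 'X_i), 1%N.
by rewrite expr1 /mono_all [RHS](bigID (fun i => F i == j)) /=.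
Qed.

Lemma PhiF_apply c : endo_apply PhiF (ind c) = ind (F c).
Proof.
apply: functional_extensionality => j.
rewrite /endo_apply /laurent_eval /= expr0 divr1 rmorph_prod /=.
under eq_bigr => i _ do rewrite mevalXU.
rewrite /ind; case: (eqVneq (F c) j) => [<-|ne].
  rewrite (bigD1 c) //= eqxx big1 ?mulr1 //.
  by move=> i /andP [_ /negbTE ->].
apply: big1 => i /eqP Fi; case: eqP => // ic; by move: ne; rewrite -ic Fi eqxx.
Qed.

Lemma PhiF_iter c n : iter n (endo_apply PhiF) (ind c) = ind (iter n F c).
Proof. by elim: n => [|n IH] //=; rewrite IH PhiF_apply. Qed.

Lemma ind_closed (T c : 'I_k) :
  in_closed [:: 'X_T - t%:MP] (ind c) <-> c = T.
Proof.
split.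
  case=> _ /(_ _ (mem_head _ _)) /eqP; rewrite mevalB mevalXU mevalC subr_eq0 /ind.
  case: (eqVneq T c) => [->//|_] E; move: t1; by rewrite -(eqP E) eqxx.
move=> ->; split.
  by move=> i; rewrite /ind; case: (i == T) => //; exact: oner_neq0.
by move=> P; rewrite inE => /eqP ->; rewrite mevalB mevalXU mevalC /ind eqxx subrr.
Qed.

End Main.

Theorem lemma2p2 (K : fieldType)
  (hK : exists x : K, (x != 0)%R /\ (x != 1)%R)
  (a b : nat) :
  K_DML_split_torus K (fun n : nat => exists t : nat, n = (a + b * t)%N).
Proof.
case: hK => t [t0 t1].
pose k := (a + b + 1).+1.
pose F : 'I_k -> 'I_k := fun i => inord (fstep a b i).
have HF n : val (iter n F ord0) = iter n (fstep a b) 0%N.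
  elim: n => [|n IH] //=; rewrite /F inordK IH //.
  by have := fstep_iter_le a b n.+1; rewrite /= ltnS.
exists k; split => //; exists (@PhiF K k F); split; first exact: PhiF_endo.
exists (@ind K k t ord0); split.
  by move=> i; rewrite /ind; case: (i == ord0) => //; exact: oner_neq0.
exists [:: 'X_(inord a) - t%:MP] => n.
rewrite PhiF_iter ind_closed // fstep_set -HF; split.
  by move=> E; apply: val_inj; rewrite /= E inordK // /k; lia.
by move=> ->; rewrite /= inordK // /k; lia.
Qed.
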